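(* Let $p>2$ be a prime and $d>0$ an integer. Suppose $-1\in QR_p$ and $\epsilon\in QNR_p$, where $\epsilon\in\mathbb{Z}_p^*$ satisfies $\epsilon^2\equiv-1\pmod p$. Let $n_1$ be the number of distinct values $y^4\in\mathbb{Z}_p^*$ for which $y^4-1\equiv x^2\pmod p$ has a solution with $x^2\in\mathbb{Z}_p^*$, and let $n_2$ be the number of distinct values $y^4\in\mathbb{Z}_p^*$ for which $y^4+1\equiv x^2\pmod p$ has a solution with $x^2\in\mathbb{Z}_p^*$. Then $$n_1+n_2=\frac{p-5}{4}.$$
   Context: $\mathbb{Z}_p^*=\{1,\dots,p-1\}$ is the multiplicative group modulo $p$. $QR_p=\{x\in\mathbb{Z}_p^*: \exists y\in\mathbb{Z}_p^*,\ y^2\equiv x \pmod p\}$ is the set of nonzero quadratic residues modulo $p$ and $QNR_p=\mathbb{Z}_p^*\setminus QR_p$ the set of quadratic nonresidues. *)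

(* Defs.v *)
From mathcomp Require Import all_boot all_order all_algebra.
Set Implicit Arguments. Unset Strict Implicit. Unset Printing Implicit Defensive.
Import GRing.Theory.
Local Open Scope ring_scope.

(* Z_p^* is modelled by the nonzero elements of 'F_p (p prime). *)
Definition QR (p : nat) (a : 'F_p) : bool :=
  (a != 0) && [exists y : 'F_p, (y != 0) && (y ^+ 2 == a)].
Definition QNR (p : nat) (a : 'F_p) : bool := (a != 0) && ~~ QR a.

Definition n1 (p : nat) : nat :=
  #|[set z : 'F_p | [exists y : 'F_p, (y != 0) && (z == y ^+ 4)] &&
                    [exists x : 'F_p, (x ^+ 2 != 0) && (z - 1 == x ^+ 2)]]|.
Definition n2 (p : nat) : nat :=
  #|[set z : 'F_p | [exists y : 'F_p, (y != 0) && (z == y ^+ 4)] &&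
                    [exists x : 'F_p, (x ^+ 2 != 0) && (z + 1 == x ^+ 2)]]|.

(* Main.v *)
Require Import Defs.
From mathcomp Require Import all_boot all_order all_algebra.
From mathcomp Require Import fingroup cyclic finalg ring.
Local Open Scope ring_scope.

Module Aux.
Set Implicit Arguments. Unset Strict Implicit. Unset Printing Implicit Defensive.
Import GRing.Theory.
Local Open Scope ring_scope.

Lemma gen_ex (F : finFieldType) : exists g : F, forall x : F, x != 0 -> exists k, x = g ^+ k.
Proof.
have /cyclicP [g Hg] := field_unit_group_cyclic [set: {unit F}]%G.
exists (val g) => x x0.
have ux : x \is a GRing.unit by rewrite unitfE.
have : FinRing.unit F ux \in <[g]>%g by rewrite -Hg inE.
case/cycleP => k Hk; exists k.
by rewrite -FinRing.val_unitX -Hk.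
Qed.

Section Main.
Variable F : finFieldType.
Variable eps : F.
Hypothesis two : (2 : F) != 0.
Hypothesis he : eps ^+ 2 = -1.
Hypothesis hne : forall y : F, y ^+ 2 != eps.

Definition sqb (x : F) := [exists y, y ^+ 2 == x].
Definition Qb (x : F) := (x != 0) && sqb x.
Definition F4 (z : F) := [exists y, (y != 0) && (z == y ^+ 4)].

Lemma sqbP x : reflect (exists y, y ^+ 2 = x) (sqb x).
Proof. by apply: (iffP existsP) => -[y /eqP]; exists y. Qed.

Lemma eps0 : eps != 0.
Proof. apply/eqP => e0; move: he; rewrite e0 expr0n /= => /eqP; rewrite eq_sym oppr_eq0 oner_eq0 //. Qed.

Lemma nsq_mul x : x != 0 -> ~~ sqb x -> sqb (eps * x).
Proof.
move=> x0 nx; have [g Hg] := gen_ex F.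
have [i Hi] := Hg _ eps0; have [j Hj] := Hg _ x0.
have oddsq k y : y = g ^+ k -> ~~ sqb y -> odd k.
  move=> -> ny; apply/negPn/negP => ek; move/negP: ny; apply.
  apply/sqbP; exists (g ^+ k./2); rewrite -exprM.
  by rewrite -{2}(odd_double_half k) (negbTE ek) add0n -muln2 mulnC.
have oi := oddsq _ _ Hi (introN (sqbP eps) (fun '(ex_intro y hy) => (negP (hne y)) (introT eqP hy))).
have oj := oddsq _ _ Hj nx.
apply/sqbP; exists (g ^+ (i + j)./2); rewrite -exprM Hi Hj -exprD.
have : ~~ odd (i + j) by rewrite oddD oi oj.
by move=> e; rewrite -{2}(odd_double_half (i + j)) (negbTE e) add0n -muln2 mulnC.
Qed.

Lemma sqN x : sqb (- x) = sqb x.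
Proof.
suff H z : sqb z -> sqb (- z).
  by apply/idP/idP => [/H|/H//]; rewrite opprK.
case/sqbP => y <-; apply/sqbP; exists (eps * y).
by rewrite exprMn he mulN1r.
Qed.

Lemma QbN x : Qb (- x) = Qb x.
Proof. by rewrite /Qb sqN oppr_eq0. Qed.

Lemma F4P z : reflect (exists2 y, y != 0 & z = y ^+ 4) (F4 z).
Proof.
apply: (iffP existsP) => [[y /andP[y0 /eqP]]|[y y0 ->]]; first by exists y.
by exists y; rewrite y0 eqxx.
Qed.

Lemma F4_Q z : F4 z -> Qb z.
Proof.
case/F4P => y y0 ->; rewrite /Qb expf_neq0 //=; apply/sqbP; exists (y ^+ 2).
by rewrite -exprM.
Qed.

Lemma Q_F4 w : Qb w -> F4 w || F4 (- w).
Proof.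
case/andP => w0 /sqbP [u hu]; have u0 : u != 0 by apply: contraNneq w0 => u0; rewrite -hu u0 expr0n.
case: (boolP (sqb u)) => [/sqbP [s hs]|nu].
  apply/orP; left; apply/F4P; exists s; last by rewrite -hu -hs -exprM.
  by apply: contraNneq u0 => s0; rewrite -hs s0 expr0n.
have /sqbP [s hs] := nsq_mul u0 nu.
apply/orP; right; apply/F4P; exists s.
  by apply: contraNneq (mulf_neq0 eps0 u0) => s0; rewrite -hs s0 expr0n.
by rewrite -hu (exprM s 2 2) hs exprMn he mulN1r.
Qed.

Lemma F4_disj z : F4 z -> ~~ F4 (- z).
Proof.
case/F4P => y y0 ->; apply/negP => /F4P [x x0 hx].
have r2 : ((y / x) ^+ 2) ^+ 2 = eps ^+ 2.
  rewrite he -exprM expr_div_n -[y ^+ 4]opprK hx mulNr divff //.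
  by rewrite expf_neq0.
move/eqP: r2; rewrite -subr_eq0 subr_sqr mulf_eq0 subr_eq0 addr_eq0 => /orP [] /eqP r.
  by move: (hne (y / x)); rewrite r eqxx.
move: (hne (eps * (y / x))); rewrite exprMn r he mulrN mulN1r opprK eqxx //.
Qed.

Lemma exQ c : [exists x, (x ^+ 2 != 0) && (c == x ^+ 2)] = Qb c.
Proof.
apply/existsP/andP => [[x /andP[x0 /eqP ->]]|[c0 /sqbP[x hx]]].
  by split=> //; apply/sqbP; exists x.
by exists x; rewrite hx c0 eqxx.
Qed.

Definition W := [set w : F | Qb w && Qb (w - 1)].

Lemma card_split :
  addn #|[set z : F | [exists y, (y != 0) && (z == y ^+ 4)] &&
                    [exists x, (x ^+ 2 != 0) && (z - 1 == x ^+ 2)]]|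
   #|[set z : F | [exists y, (y != 0) && (z == y ^+ 4)] &&
                    [exists x, (x ^+ 2 != 0) && (z + 1 == x ^+ 2)]]| = #|W|.
Proof.
rewrite -(cardsID [set z | F4 z] W); congr (_ + _)%N.
  apply: eq_card => z; rewrite !inE exQ -/(F4 z).
  by case: (boolP (F4 z)) => h; rewrite ?andbF ?andbT // (F4_Q h).
rewrite -(card_preimset _ (@oppr_inj F)); apply: eq_card => w; rewrite !inE exQ -/(F4 (- w)).
rewrite -(QbN (- w + 1)) opprD opprK -/(F4 w).
case: (boolP (F4 (- w))) => h /=.
  have := F4_disj h; rewrite opprK => /negbTE ->.
  by move: (F4_Q h); rewrite QbN => ->.
case: (boolP (Qb w)) => qw; last by rewrite !andbF.
by move: (Q_F4 qw); rewrite (negbTE h) orbF => ->.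
Qed.

Lemma neq_opp (a : F) : a != 0 -> a != - a.
Proof.
move=> a0; apply/eqP => h; move/eqP: two; apply.
have : a * 2 = 0 by transitivity (a + a); [ring | rewrite {2}h subrr].
by move/eqP; rewrite mulf_eq0 (negbTE a0) => /eqP.
Qed.

Lemma card_roots (a : F) : a != 0 -> #|[set u : F | u ^+ 2 == a ^+ 2]| = 2%N.
Proof.
move=> a0; have -> : [set u : F | u ^+ 2 == a ^+ 2] = [set a; - a].
  by apply/setP => u; rewrite !inE eqf_sqr.
by rewrite cards2 (neq_opp a0).
Qed.

Definition Spairs := [set x : F * F | (x.1 != 0) && (x.2 != 0) && (x.1 ^+ 2 - x.2 ^+ 2 == 1)].

Lemma card_S_W : #|Spairs| = (#|W| * 4)%N.
Proof.
rewrite -sum1_card (partition_big (fun x : F * F => x.1 ^+ 2) (mem W)) /=; last first.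
  case=> u v; rewrite inE /= => /andP[/andP[u0 v0] /eqP h]; rewrite inE /Qb.
  rewrite expf_neq0 //=; apply/and3P; split.
  - by apply/sqbP; exists u.
  - by rewrite -h opprB addrC subrK expf_neq0.
  - by apply/sqbP; exists v; rewrite -h opprB addrC subrK.
rewrite -sum_nat_const; apply: eq_bigr => w; rewrite inE => /andP[/andP[w0 /sqbP[a ha]] /andP[w1 /sqbP[b hb]]].
rewrite sum1dep_card.
have a0 : a != 0 by apply: contraNneq w0 => a0; rewrite -ha a0 expr0n.
have b0 : b != 0 by apply: contraNneq w1 => b0; rewrite -hb b0 expr0n.
rewrite (_ : 4%N = #|[set u | u ^+ 2 == a ^+ 2]| * #|[set v | v ^+ 2 == b ^+ 2]|)%N; last first.
  by rewrite (card_roots a0) (card_roots b0).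
rewrite -cardsX; apply: eq_card => -[u v]; rewrite !inE /= ha hb.
apply/idP/idP.
  case/andP => /andP[/andP[u0 v0] /eqP h] /eqP hu.
  by rewrite hu eqxx /= -hu -h opprB addrC subrK.
case/andP => /eqP hu /eqP hv; rewrite hu hv eqxx andbT.
rewrite -hb in hv; rewrite -ha in hu.
apply/andP; split.
  by apply/andP; split; [apply: contraNneq w0 => u0; rewrite -ha -hu u0 expr0n | apply: contraNneq w1 => v0; rewrite -hb -hv v0 expr0n].
by rewrite opprB addrC subrK.
Qed.

Definition T5 := 0 |: (1 |: (-1 |: (eps |: [set - eps]))) : {set F}.

Lemma inv_sqN1 (t : F) : t ^+ 2 = -1 -> t^-1 = - t.
Proof.
move=> h; have t0 : t != 0 by apply: contraTneq isT => t0; move: h; rewrite t0 expr0n /= => /eqP; rewrite eq_sym oppr_eq0 oner_eq0.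
by apply: (mulfI t0); rewrite mulfV // mulrN -expr2 h opprK.
Qed.

Lemma card_T5 : #|T5| = 5%N.
Proof.
have o1 : (1 : F) != -1 := neq_opp (oner_neq0 F).
have e1 : eps != 1 by apply: contraNneq o1 => e; rewrite -he e expr1n.
have em1 : eps != -1 by apply: contraNneq o1 => e; rewrite -he e sqrrN expr1n.
have eme := neq_opp eps0.
rewrite /T5 !cardsU1 cards1 !inE.
rewrite !(eq_sym 0) !oppr_eq0 oner_eq0 (negbTE eps0) (negbTE o1).
have h1 : (1 == - eps) = false by rewrite eq_sym eqr_oppLR (negbTE em1).
have h2 : (-1 == eps) = false by rewrite eq_sym (negbTE em1).
have h3 : (-1 == - eps) = false by rewrite eqr_opp eq_sym (negbTE e1).
by rewrite (eq_sym 1) (negbTE e1) h1 h2 h3 eme.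
Qed.

Definition g (t : F) := ((t + t^-1) / 2, (t^-1 - t) / 2).

Lemma S_inv x : x \in Spairs -> x.1 - x.2 != 0 /\ (x.1 - x.2)^-1 = x.1 + x.2.
Proof.
case: x => u v; rewrite inE /= => /andP[_ /eqP h].
have h' : (u - v) * (u + v) = 1 by rewrite -subr_sqr.
have t0 : u - v != 0 by apply: contra_eq_neq h' => ->; rewrite mul0r eq_sym oner_neq0.
by split=> //; rewrite -[_^-1]mulr1 -h' mulKf.
Qed.

Lemma gK x : x \in Spairs -> g (x.1 - x.2) = x.
Proof.
move=> xS; have [t0 ti] := S_inv xS; rewrite /g ti.
case: x xS t0 ti => u v _ _ _ /=.
congr (_, _); field; exact: two.
Qed.

Lemma card_S : #|Spairs| = (#|F| - 5)%N.
Proof.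
have inj : {in Spairs &, injective (fun x : F * F => x.1 - x.2)}.
  by move=> x y xS yS e; rewrite -(gK xS) -(gK yS) e.
rewrite -(card_in_imset inj).
have -> : [set x.1 - x.2 | x in Spairs] = ~: T5; last first.
  by rewrite -card_T5 -(cardsC T5) addKn.
apply/setP => t; rewrite !inE !negb_or; apply/imsetP/idP.
  case=> x xS ->; have [t0 ti] := S_inv xS.
  move: xS; case: x t0 ti => u v /=; rewrite inE /= => t0 ti /andP[/andP[u0 v0] _].
  have Hu : (u - v) + (u - v)^-1 != 0.
    by rewrite ti (_ : _ + _ = u * 2); [rewrite mulf_neq0 | ring].
  have Hv : (u - v)^-1 - (u - v) != 0.
    by rewrite ti (_ : _ - _ = v * 2); [rewrite mulf_neq0 | ring].
  move: (u - v) t0 Hu Hv => {ti} t t0 Hu Hv.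
  rewrite t0 /=; apply/and4P; split.
  - by apply: contraNneq Hv => ->; rewrite invr1 subrr.
  - by apply: contraNneq Hv => ->; rewrite invrN1 subrr.
  - by apply: contraNneq Hu => ->; rewrite (inv_sqN1 he) subrr.
  - by apply: contraNneq Hu => ->; rewrite (inv_sqN1 (etrans (sqrrN eps) he)) opprK addNr.
case/and5P => t0 t1 tm1 te tme; exists (g t); last first.
  by rewrite /g /=; field; rewrite two t0.
have Hu : t + t^-1 != 0.
  apply/eqP => h; have e : t^-1 = - t by apply/eqP; rewrite -addr_eq0 addrC h.
  have := mulfV t0; rewrite e mulrN -expr2 => /eqP; rewrite eqr_oppLR -he => /eqP.
  by move/eqP; rewrite eqf_sqr (negbTE te) (negbTE tme).
have Hv : t^-1 - t != 0.
  apply/eqP => h; have e : t^-1 = t by apply/eqP; rewrite -subr_eq0 h.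
  have := mulfV t0; rewrite e -expr2 -(expr1n F 2) => /eqP.
  by rewrite eqf_sqr (negbTE t1) (negbTE tm1).
rewrite inE /= !mulf_neq0 ?invr_eq0 //=.
by apply/eqP; field; rewrite two t0.
Qed.

End Main.
End Aux.
Import GRing.Theory.


Theorem lemma6 (p d : nat) (eps : 'F_p) :
  prime p -> (2 < p)%N -> (0 < d)%N ->
  QR (-1 : 'F_p) -> eps ^+ 2 = -1 -> QNR eps ->
  (4 * (n1 p + n2 p) = p - 5)%N.
Proof.
move=> pp p2 _ _ he /andP[e0 nqr].
have two : (2 : 'F_p) != 0.
  apply/negP; rewrite -(dvdn_pcharf (pchar_Fp pp)) => /(dvdn_leq (isT : (0 < 2)%N)).
  by rewrite leqNgt p2.
have hne : forall y : 'F_p, y ^+ 2 != eps.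
  move=> y; apply/negP => /eqP hy; move/negP: nqr; apply; rewrite /QR e0 /=.
  apply/existsP; exists y; rewrite hy eqxx andbT.
  by apply: contraNneq e0 => y0; rewrite -hy y0 GRing.expr0n.
rewrite /n1 /n2 (Aux.card_split he hne) mulnC -(Aux.card_S_W two).
by rewrite (Aux.card_S two he) card_Fp.
Qed.
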